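(* In the game $\mathrm{CN}(7,4)$, if $\mathbf p\notin S$ and $\mathbf p$ has at least two stacks of height $0$, then there is a legal move from $\mathbf p$ to some $\mathbf p'\in S_1\cup S_2\cup S_4$. Here, writing a position as $(a,b,c,d,e,f,g)$ with $a$ a minimum entry, $S_1=\{a=b=0,\ c=g>0,\ d+e+f=c\}$, $S_2=\{a=b=c=d=e=f=g\}$, $S_3=\{a=b,\ c=g,\ d=f,\ a+c=d+e,\ 0<a<e\}$, $S_4=\{a=f,\ b+c=d+e=g+a,\ a<\min\{b,e\},\ a<\max\{c,d\}\}$, and $S=S_1\cup S_2\cup S_3\cup S_4$.
   Context: Circular Nim $\mathrm{CN}(7,4)$: $7$ stacks of tokens are arranged in a circle; a position is a vector $(p_1,\dots,p_7)$ of nonnegative integers giving the stack heights in order around the circle, determined only up to rotation and reflection. A legal move consists of choosing $4$ cyclically consecutive stacks and removing at least one token from at least one of these $4$ stacks (any number from each chosen stack; other stacks unchanged). A position belongs to $S_i$ if some rotation and/or reflection $(a,b,c,d,e,f,g)$ of it with $a$ equal to the minimum entry satisfies the conditions defining $S_i$. *)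

(* Defs.v *)
From mathcomp Require Import all_boot.
Set Implicit Arguments. Unset Strict Implicit. Unset Printing Implicit Defensive.

(* A position: heights of the 7 stacks, indexed 0..6 in cyclic order.
   (Positions are only determined up to rotation/reflection; we work with
   a concrete representative. All notions below are invariant under the
   dihedral symmetries.) *)
Definition position := 'I_7 -> nat.

Definition hgt (p : position) (n : nat) : nat := p (inord (n %% 7)).

Definition view (p : position) (r : bool) (k : nat) (n : nat) : nat :=
  if r then hgt p (k + 7 - n) else hgt p (k + n).

Definition C1 (a b c d e f g : nat) : Prop :=
  a = 0 /\ b = 0 /\ c = g /\ 0 < c /\ d + e + f = c.
Definition C2 (a b c d e f g : nat) : Prop :=
  a = b /\ b = c /\ c = d /\ d = e /\ e = f /\ f = g.
Definition C3 (a b c d e f g : nat) : Prop :=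
  a = b /\ c = g /\ d = f /\ a + c = d + e /\ 0 < a /\ a < e.
Definition C4 (a b c d e f g : nat) : Prop :=
  a = f /\ b + c = d + e /\ d + e = g + a /\ a < minn b e /\ a < maxn c d.

Definition inSet (C : nat -> nat -> nat -> nat -> nat -> nat -> nat -> Prop)
  (p : position) : Prop :=
  exists (r : bool) (k : nat), k < 7 /\
    let q := view p r k in
    (forall i : 'I_7, q 0 <= p i) /\
    C (q 0) (q 1) (q 2) (q 3) (q 4) (q 5) (q 6).

Definition S1 := inSet C1.
Definition S2 := inSet C2.
Definition S3 := inSet C3.
Definition S4 := inSet C4.
Definition S (p : position) : Prop := S1 p \/ S2 p \/ S3 p \/ S4 p.

Definition in_window (j i : 'I_7) : bool := (i + 7 - j) %% 7 < 4.

Definition move (p p' : position) : Prop :=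
  exists j : 'I_7,
    (forall i : 'I_7, ~~ in_window j i -> p' i = p i) /\
    (forall i : 'I_7, p' i <= p i) /\
    (exists i : 'I_7, p' i < p i).

(* Main.v *)
Require Import Defs.
From mathcomp Require Import all_boot.
From mathcomp Require Import zify.
Set Warnings "-notation-overridden".


Definition rotp (k : nat) (p : position) : position := fun i => hgt p (k + i).

Lemma ar1 k k1 n : k1 < 7 -> n < 7 ->
  (k + ((k1 + 7 - k %% 7) %% 7 + n) %% 7) %% 7 = (k1 + n) %% 7.
Proof. move=> *; lia. Qed.
Lemma ar2 k k1 n : k1 < 7 -> n < 7 ->
  (k + ((k1 + 7 - k %% 7) %% 7 + 7 - n) %% 7) %% 7 = (k1 + 7 - n) %% 7.
Proof. move=> *; lia. Qed.

Lemma view_rot k q r k1 n : k1 < 7 -> n < 7 ->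
  view (rotp k q) r ((k1 + 7 - k %% 7) %% 7) n = view q r k1 n.
Proof.
move=> h1 h2; rewrite /view /rotp; case: r; rewrite /hgt inordK ?ltn_pmod //.
  by rewrite ar2.
by rewrite ar1.
Qed.

Lemma inSet_rot C q k : inSet C q -> inSet C (rotp k q).
Proof.
move=> [r [k1 [Hk1 /= [Hmin HC]]]].
exists r, ((k1 + 7 - k %% 7) %% 7); split; first by rewrite ltn_pmod.
cbv zeta; rewrite !view_rot //; split => // i.
rewrite /rotp /hgt; exact: Hmin.
Qed.

Lemma view_ext q1 q2 r k n : (forall i, q1 i = q2 i) -> view q1 r k n = view q2 r k n.
Proof. by move=> H; rewrite /view /hgt; case: r; rewrite H. Qed.

Lemma inSet_ext C q1 q2 : (forall i, q1 i = q2 i) -> inSet C q1 -> inSet C q2.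
Proof.
move=> H [r [k1 [Hk1 /= [Hmin HC]]]].
have E n : view q2 r k1 n = view q1 r k1 n by apply: view_ext.
exists r, k1; split => //; cbv zeta; rewrite !E; split => // i.
by rewrite -H.
Qed.

Lemma rot_inv q k i : rotp (7 - k %% 7) (rotp k q) i = q i.
Proof.
rewrite /rotp /hgt inordK ?ltn_pmod //; congr (q _); apply: val_inj => /=.
rewrite inordK ?ltn_pmod //; have := ltn_ord i; move: (nat_of_ord i) => m Hm; lia.
Qed.

Lemma move_ext p1 p2 p1' p2' : (forall i, p1 i = p2 i) -> (forall i, p1' i = p2' i) ->
  move p1 p1' -> move p2 p2'.
Proof.
move=> H H' [j [H1 [H2 [i Hi]]]]; exists j; split; [|split].
- by move=> i0 Hw; rewrite -H -H'; apply: H1.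
- by move=> i0; rewrite -H -H'.
- by exists i; rewrite -H -H'.
Qed.

Lemma move_rot k q q' : move q q' -> move (rotp k q) (rotp k q').
Proof.
move=> [j [H1 [H2 [i Hi]]]].
exists (inord ((j + 7 - k %% 7) %% 7)); split; [|split].
- move=> i0 Hw; rewrite /rotp /hgt; apply: H1; move: Hw.
  rewrite /in_window !inordK ?ltn_pmod //.
  have := ltn_ord i0; have := ltn_ord j; move: (nat_of_ord i0) (nat_of_ord j) => a b ha hb.
  have -> : ((k + a) %% 7 + 7 - b) %% 7 = (a + 7 - (b + 7 - k %% 7) %% 7) %% 7 by lia.
  done.
- by move=> i0; rewrite /rotp /hgt; apply: H2.
- exists (inord ((i + 7 - k %% 7) %% 7)); rewrite /rotp /hgt inordK ?ltn_pmod //.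
  have -> : (inord ((k + (i + 7 - k %% 7) %% 7) %% 7) : 'I_7) = i; last done.
  apply: val_inj => /=; rewrite inordK ?ltn_pmod //.
  have := ltn_ord i; move: (nat_of_ord i) => m Hm; lia.
Qed.

Definition G (p : position) := exists p', move p p' /\ (S1 p' \/ S2 p' \/ S4 p').

Lemma G_ext p1 p2 : (forall i, p1 i = p2 i) -> G p1 -> G p2.
Proof. move=> H [p' [Hm HS]]; exists p'; split => //; move: Hm; apply: move_ext => //. Qed.

Lemma G_rot k p : G (rotp k p) -> G p.
Proof.
move=> [p'' [Hm HS]]; exists (rotp (7 - k %% 7) p''); split.
  have := move_rot (7 - k %% 7) _ _ Hm. apply: move_ext => //. exact: rot_inv.
by case: HS => [H|[H|H]]; [left|right;left|right;right]; apply: inSet_rot.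
Qed.

Lemma notS_rot k p : ~ S p -> ~ S (rotp k p).
Proof.
move=> HnS HS; apply: HnS.
have E := rot_inv p k.
by case: HS => [H|[H|[H|H]]]; [left|right;left|right;right;left|right;right;right];
  apply: (@inSet_ext _ _ _ E); apply: inSet_rot.
Qed.


Definition mk (x0 x1 x2 x3 x4 x5 x6 : nat) : position :=
  fun i => nth 0 [:: x0;x1;x2;x3;x4;x5;x6] i.

Lemma view_mk x0 x1 x2 x3 x4 x5 x6 r k n :
  view (mk x0 x1 x2 x3 x4 x5 x6) r k n =
  nth 0 [:: x0;x1;x2;x3;x4;x5;x6] (if r then (k+7-n) %% 7 else (k+n)%%7).
Proof. by rewrite /view /hgt /mk; case: r; rewrite inordK // ltn_pmod. Qed.

Ltac red7 := repeat match goal with |- context [?a %% 7] => let v := eval vm_compute in (a %% 7) in change (a %% 7) with v end.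

Ltac inS r k := exists r, k; split; [by []|]; cbv zeta; rewrite !view_mk; red7; rewrite /=;
  split; [case=> [[|[|[|[|[|[|[|i]]]]]]] Hi] //=; rewrite /mk /=; lia | ].

Lemma mk_strict x0 x1 x2 x3 x4 x5 x6 y0 y1 y2 y3 y4 y5 y6 :
  y0 <= x0 -> y1 <= x1 -> y2 <= x2 -> y3 <= x3 -> y4 <= x4 -> y5 <= x5 -> y6 <= x6 ->
  y0 + y1 + y2 + y3 + y4 + y5 + y6 < x0 + x1 + x2 + x3 + x4 + x5 + x6 ->
  exists i : 'I_7, mk y0 y1 y2 y3 y4 y5 y6 i < mk x0 x1 x2 x3 x4 x5 x6 i.
Proof.
move=> *.
have : y0 < x0 \/ y1 < x1 \/ y2 < x2 \/ y3 < x3 \/ y4 < x4 \/ y5 < x5 \/ y6 < x6 by lia.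
case=> [H|[H|[H|[H|[H|[H|H]]]]]]; [exists (inord 0)|exists (inord 1)|exists (inord 2)|exists (inord 3)
  |exists (inord 4)|exists (inord 5)|exists (inord 6)]; by rewrite /mk inordK.
Qed.

Ltac mv j := exists (inord j); split; [|split];
  [ case=> [[|[|[|[|[|[|[|i]]]]]]] Hi] //=; rewrite /in_window /mk inordK //=; lia
  | case=> [[|[|[|[|[|[|[|i]]]]]]] Hi] //=; rewrite /mk /=; lia
  | apply: mk_strict; lia ].

Lemma coreA c d e f g : ~ S (mk 0 0 c d e f g) -> G (mk 0 0 c d e f g).
Proof.
move=> HnS.
have z : S2 (mk 0 0 0 0 0 0 0) by inS false 0; rewrite /C2.
case: (posnP c) => Hc.
  have [Hs|Hs] : 0 < d + e + f + g \/ (d = 0 /\ e = 0 /\ f = 0 /\ g = 0) by lia.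
    exists (mk 0 0 0 0 0 0 0); split; last by right; left.
    mv 3.
  exfalso; apply: HnS; right; left; inS false 0; rewrite /C2; lia.
case: (posnP g) => Hg.
  exists (mk 0 0 0 0 0 0 0); split; last by right; left.
  mv 2.
set s := d + e + f.
case: (posnP s) => Hs.
  exists (mk 0 0 0 0 0 0 0); split; last by right; left.
  mv 6.
have [H1|[H1|H1]] : (s < c /\ s < g) \/ (c <= g /\ c <= s) \/ (g < c /\ g <= s) by lia.
- exists (mk 0 0 s d e f s); split; last by left; inS false 0; rewrite /C1; lia.
  mv 6.
- set D := minn d c; set E := minn e (c - D); set F := c - D - E.
  have [Hl|He] : D + E + F + c < d + e + f + g \/ (D = d /\ E = e /\ F = f /\ c = g) by lia.
    exists (mk 0 0 c D E F c); split; last by left; inS false 0; rewrite /C1; lia.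
    mv 3.
  exfalso; apply: HnS; left; inS false 0; rewrite /C1; lia.
- set D := minn d g; set E := minn e (g - D); set F := g - D - E.
  exists (mk 0 0 g D E F g); split; last by left; inS false 0; rewrite /C1; lia.
  mv 2.
Qed.

Lemma coreB b d e f g : 0 < b -> 0 < d -> 0 < g -> 0 < e + f ->
  ~ S (mk 0 b 0 d e f g) -> G (mk 0 b 0 d e f g).
Proof.
move=> Hb Hd Hg Hef HnS.
have [H1|[H1|[H1|[H1|[H1|H1]]]]] :
  (b = 1 /\ b <= d + e /\ b <= f + g) \/ (2 <= b /\ b <= d + e /\ b <= f + g) \/
  (f + g < b /\ f + g <= d + e /\ (0 < f \/ 2 <= g)) \/
  (f + g < b /\ f + g <= d + e /\ f = 0 /\ g = 1) \/
  (d + e < b /\ d + e < f + g /\ (0 < e \/ 2 <= d)) \/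
  (d + e < b /\ d + e < f + g /\ e = 0 /\ d = 1) by lia.
- have [Hl|He] : 3 < b + d + e + f + g \/ (d = 1 /\ e = 0 /\ f = 0 /\ g = 1) by lia.
    exists (mk 0 1 0 1 0 0 1); split; last by left; inS false 4; rewrite /C1; lia.
    mv 3.
  exfalso; apply: HnS; left; inS false 4; rewrite /C1; lia.
- set E := minn e (b - 1); set D := b - E; set F := minn f (b - 1); set G' := b - F.
  have [Hl|He] : D + E + F + G' < d + e + f + g \/ (D = d /\ E = e /\ F = f /\ G' = g) by lia.
    exists (mk 0 b 0 D E F G'); split; last by right; right; inS false 2; rewrite /C4; lia.
    mv 3.
  exfalso; apply: HnS; right; right; right; inS false 2; rewrite /C4; lia.
- set D := maxn 1 (f + g - e); set E := f + g - D.
  exists (mk 0 (f + g) 0 D E f g); split; last by right; right; inS false 2; rewrite /C4; lia.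
  mv 1.
- exists (mk 0 1 0 0 1 0 1); split; last by left; inS false 2; rewrite /C1; lia.
  mv 1.
- set G' := maxn 1 (d + e - f); set F := d + e - G'.
  exists (mk 0 (d + e) 0 d e F G'); split; last by right; right; inS false 2; rewrite /C4; lia.
  mv 5.
- exists (mk 0 1 0 1 0 1 0); split; last by left; inS false 6; rewrite /C1; lia.
  mv 5.
Qed.

Lemma LD1 b c e f g (Hb : 0 < b) (Hc : 0 < c) (He : 0 < e) (Hf : 0 < f) (Hg : 0 < g) : c <= g -> e <= c -> G (mk 0 b c 0 e f g).
Proof.
move=> H1 H2.
case: (leqP c (e+f)) => H3.
- exists (mk 0 0 c 0 e (c-e) c); split; last by left; inS false 0; rewrite /C1; lia.
  mv 5.
- exists (mk 0 0 (e+f) 0 e f (e+f)); split; last by left; inS false 0; rewrite /C1; lia.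
  mv 6.
Qed.

Lemma LD2 b c e f g (Hb : 0 < b) (Hc : 0 < c) (He : 0 < e) (Hf : 0 < f) (Hg : 0 < g) : g <= c -> f <= g -> G (mk 0 b c 0 e f g).
Proof.
move=> H1 H2.
case: (leqP g (e+f)) => H3.
- exists (mk 0 0 g 0 (g-f) f g); split; last by left; inS false 0; rewrite /C1; lia.
  mv 1.
- exists (mk 0 0 (e+f) 0 e f (e+f)); split; last by left; inS false 0; rewrite /C1; lia.
  mv 6.
Qed.

Lemma LC1 b c e f g (Hb : 0 < b) (Hc : 0 < c) (He : 0 < e) (Hf : 0 < f) (Hg : 0 < g) : b <= e -> g <= b -> G (mk 0 b c 0 e f g).
Proof.
move=> H1 H2.
case: (leqP b (g+f)) => H3.
- exists (mk 0 b 0 0 b (b-g) g); split; last by left; inS true 3; rewrite /C1; lia.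
  mv 2.
- exists (mk 0 (f+g) 0 0 (f+g) f g); split; last by left; inS true 3; rewrite /C1; lia.
  mv 1.
Qed.

Lemma LC2 b c e f g (Hb : 0 < b) (Hc : 0 < c) (He : 0 < e) (Hf : 0 < f) (Hg : 0 < g) : e <= b -> f <= e -> G (mk 0 b c 0 e f g).
Proof.
move=> H1 H2.
case: (leqP e (g+f)) => H3.
- exists (mk 0 e 0 0 e f (e-f)); split; last by left; inS true 3; rewrite /C1; lia.
  mv 6.
- exists (mk 0 (f+g) 0 0 (f+g) f g); split; last by left; inS true 3; rewrite /C1; lia.
  mv 1.
Qed.

Lemma LF1 b c e f g (Hb : 0 < b) (Hc : 0 < c) (He : 0 < e) (Hf : 0 < f) (Hg : 0 < g) : b <= f -> c <= b -> G (mk 0 b c 0 e f g).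
Proof.
move=> H1 H2.
case: (leqP b (c+e)) => H3.
- exists (mk 0 b c 0 (b-c) b 0); split; last by left; inS false 6; rewrite /C1; lia.
  mv 3.
- exists (mk 0 (c+e) c 0 e (c+e) 0); split; last by left; inS false 6; rewrite /C1; lia.
  mv 5.
Qed.

Lemma LF2 b c e f g (Hb : 0 < b) (Hc : 0 < c) (He : 0 < e) (Hf : 0 < f) (Hg : 0 < g) : f <= b -> e <= f -> G (mk 0 b c 0 e f g).
Proof.
move=> H1 H2.
case: (leqP f (e+c)) => H3.
- exists (mk 0 f (f-e) 0 e f 0); split; last by left; inS false 6; rewrite /C1; lia.
  mv 6.
- exists (mk 0 (c+e) c 0 e (c+e) 0); split; last by left; inS false 6; rewrite /C1; lia.
  mv 5.
Qed.

Lemma LE1 b c e f g (Hb : 0 < b) (Hc : 0 < c) (He : 0 < e) (Hf : 0 < f) (Hg : 0 < g) : c <= f -> b <= c -> G (mk 0 b c 0 e f g).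
Proof.
move=> H1 H2.
case: (leqP c (b+g)) => H3.
- exists (mk 0 b c 0 0 c (c-b)); split; last by left; inS false 3; rewrite /C1; lia.
  mv 4.
- exists (mk 0 b (b+g) 0 0 (b+g) g); split; last by left; inS false 3; rewrite /C1; lia.
  mv 2.
Qed.

Lemma LE2 b c e f g (Hb : 0 < b) (Hc : 0 < c) (He : 0 < e) (Hf : 0 < f) (Hg : 0 < g) : f <= c -> g <= f -> G (mk 0 b c 0 e f g).
Proof.
move=> H1 H2.
case: (leqP f (g+b)) => H3.
- exists (mk 0 (f-g) f 0 0 f g); split; last by left; inS false 3; rewrite /C1; lia.
  mv 1.
- exists (mk 0 b (b+g) 0 0 (b+g) g); split; last by left; inS false 3; rewrite /C1; lia.
  mv 2.
Qed.

Lemma LA1 b c e f g (Hb : 0 < b) (Hc : 0 < c) (He : 0 < e) (Hf : 0 < f) (Hg : 0 < g) : g <= e -> b < g -> G (mk 0 b c 0 e f g).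
Proof.
move=> H1 H2.
case: (leqP g (b+c)) => H3.
- exists (mk 0 b (g-b) 0 g 0 g); split; last by right; right; inS false 5; rewrite /C4; lia.
  mv 2.
- exists (mk 0 b c 0 (b+c) 0 (b+c)); split; last by right; right; inS false 5; rewrite /C4; lia.
  mv 3.
Qed.

Lemma LA2 b c e f g (Hb : 0 < b) (Hc : 0 < c) (He : 0 < e) (Hf : 0 < f) (Hg : 0 < g) : e <= g -> c < e -> G (mk 0 b c 0 e f g).
Proof.
move=> H1 H2.
case: (leqP e (b+c)) => H3.
- exists (mk 0 (e-c) c 0 e 0 e); split; last by right; right; inS false 5; rewrite /C4; lia.
  mv 5.
- exists (mk 0 b c 0 (b+c) 0 (b+c)); split; last by right; right; inS false 5; rewrite /C4; lia.
  mv 3.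
Qed.

Lemma coreC b c e f g : 0 < b -> 0 < c -> 0 < e -> 0 < f -> 0 < g ->
  G (mk 0 b c 0 e f g).
Proof.
move=> Hb Hc He Hf Hg.
case: (leqP c g) => h1.
  case: (leqP e c) => h2; first by apply: LD1; lia.
  case: (leqP e g) => h3; first by apply: LA2; lia.
  case: (leqP e b) => h4.
    case: (leqP f e) => h5; first by apply: LC2; lia.
    case: (leqP f b) => h6; first by apply: LF2; lia.
    case: (leqP b c) => h7; first by apply: LE1; lia.
    by apply: LF1; lia.
  case: (leqP g b) => h5; first by apply: LC1; lia.
  by apply: LA1; lia.
case: (leqP f g) => h2; first by apply: LD2; lia.
case: (leqP f c) => h3; first by apply: LE2; lia.
case: (leqP b c) => h4; first by apply: LE1; lia.
case: (leqP b f) => h5; first by apply: LF1; lia.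
case: (leqP e f) => h6; first by apply: LF2; lia.
case: (leqP e b) => h7; first by apply: LC2; lia.
by apply: LC1; lia.
Qed.


Lemma reduce p k : ~ S p ->
  (~ S (mk (hgt p (k+0)) (hgt p (k+1)) (hgt p (k+2)) (hgt p (k+3)) (hgt p (k+4))
          (hgt p (k+5)) (hgt p (k+6))) ->
   G (mk (hgt p (k+0)) (hgt p (k+1)) (hgt p (k+2)) (hgt p (k+3)) (hgt p (k+4))
          (hgt p (k+5)) (hgt p (k+6)))) -> G p.
Proof.
move=> HnS H; apply: (G_rot k).
have E : forall i, mk (hgt p (k+0)) (hgt p (k+1)) (hgt p (k+2)) (hgt p (k+3)) (hgt p (k+4))
          (hgt p (k+5)) (hgt p (k+6)) i = rotp k p i.
  by case=> [[|[|[|[|[|[|[|i]]]]]]] Hi].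
apply: (G_ext _ _ E); apply: H => HS; apply: (notS_rot k p HnS).
case: HS => [h|[h|[h|h]]]; [left|right;left|right;right;left|right;right;right];
  exact: (inSet_ext _ _ _ E).
Qed.

Lemma hm p m n : m %% 7 = n %% 7 -> hgt p m = hgt p n.
Proof. by rewrite /hgt => ->. Qed.

Lemma caseB_fin p k : ~ S p -> hgt p (k+0) = 0 -> hgt p (k+2) = 0 ->
  (forall n, hgt p n = 0 -> hgt p (n+1) <> 0) -> G p.
Proof.
move=> HnS h0 h2 nA; apply: (reduce p k HnS); rewrite h0 h2 => H.
apply: coreB => //.
- case: (posnP (hgt p (k+1))) => // hX; case: (nA _ h0); rewrite (hm p (k+0+1) (k+1)) //; lia.
- case: (posnP (hgt p (k+3))) => // hX; case: (nA _ h2); rewrite (hm p (k+2+1) (k+3)) //; lia.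
- case: (posnP (hgt p (k+6))) => // hX; case: (nA _ hX); rewrite (hm p (k+6+1) (k+0)) //; lia.
- case: (posnP (hgt p (k+4))) => h4; last lia.
  have := nA _ h4; rewrite (hm p (k+4+1) (k+5)); lia.
Qed.

Lemma caseC_fin p k : ~ S p -> hgt p (k+0) = 0 -> hgt p (k+3) = 0 ->
  (forall n, hgt p n = 0 -> hgt p (n+1) <> 0) ->
  (forall n, hgt p n = 0 -> hgt p (n+2) <> 0) -> G p.
Proof.
move=> HnS h0 h3 nA nB; apply: (reduce p k HnS); rewrite h0 h3 => _.
apply: coreC.
- case: (posnP (hgt p (k+1))) => // hX; case: (nA _ h0); rewrite (hm p (k+0+1) (k+1)) //; lia.
- case: (posnP (hgt p (k+2))) => // hX; case: (nA _ hX); rewrite (hm p (k+2+1) (k+3)) //; lia.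
- case: (posnP (hgt p (k+4))) => // hX; case: (nA _ h3); rewrite (hm p (k+3+1) (k+4)) //; lia.
- case: (posnP (hgt p (k+5))) => // hX; case: (nB _ h3); rewrite (hm p (k+3+2) (k+5)) //; lia.
- case: (posnP (hgt p (k+6))) => // hX; case: (nA _ hX); rewrite (hm p (k+6+1) (k+0)) //; lia.
Qed.

Theorem lemma2 (p : position) :
  ~ S p ->
  (exists i j : 'I_7, i != j /\ p i = 0 /\ p j = 0) ->
  exists p' : position, move p p' /\ (S1 p' \/ S2 p' \/ S4 p').
Proof.
move=> HnS [i [j [Hij [Hi Hj]]]].
have hp : forall i : 'I_7, hgt p i = p i.
  by move=> i0; rewrite /hgt modn_small // inord_val.
case: (boolP [exists k : 'I_7, (hgt p k == 0) && (hgt p (k+1) == 0)]).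
  move/existsP => [k /andP [/eqP h0 /eqP h1]].
  apply: (reduce p k HnS); rewrite addn0 h0 h1 => H; exact: coreA H.
move/existsPn => nA0.
have nA : forall n, hgt p n = 0 -> hgt p (n+1) <> 0.
  move=> n h0 h1; move: (nA0 (inord (n %% 7))); rewrite inordK ?ltn_pmod //.
  by rewrite (hm p (n %% 7) n) ?modn_mod // (hm p (n %% 7 + 1) (n+1)) ?h0 ?h1 //; lia.
case: (boolP [exists k : 'I_7, (hgt p k == 0) && (hgt p (k+2) == 0)]).
  move/existsP => [k /andP [/eqP h0 /eqP h2]].
  by apply: (caseB_fin p (k) HnS) => //; rewrite addn0.
move/existsPn => nB0.
have nB : forall n, hgt p n = 0 -> hgt p (n+2) <> 0.
  move=> n h0 h1; move: (nB0 (inord (n %% 7))); rewrite inordK ?ltn_pmod //.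
  by rewrite (hm p (n %% 7) n) ?modn_mod // (hm p (n %% 7 + 2) (n+2)) ?h0 ?h1 //; lia.
have Hv : (i : nat) <> j by move=> E; move/eqP: Hij; apply; apply: val_inj.
have hi : hgt p i = 0 by rewrite hp.
have hj : hgt p j = 0 by rewrite hp.
have Hi7 := ltn_ord i; have Hj7 := ltn_ord j.
move: (nat_of_ord i) (nat_of_ord j) Hv hi hj Hi7 Hj7 => a b Hv hi hj Ha Hb.
have : b = a + 1 \/ b = a + 2 \/ b + 4 = a \/ b = a + 3 \/ b + 3 = a \/
       b + 5 = a \/ b + 2 = a \/ b + 6 = a \/ b + 1 = a \/ b = a + 4 \/ b = a + 5 \/ b = a + 6
  by lia.
case=> [E|[E|[E|[E|[E|[E|[E|[E|[E|[E|[E|E]]]]]]]]]]]; subst.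
- by case: (nA _ hi).
- by case: (nB _ hi).
- by apply: (caseC_fin p (b+4) HnS); rewrite ?addn0 // (hm p (b+4+3) b) //; lia.
- by apply: (caseC_fin p (a) HnS); rewrite ?addn0.
- by apply: (caseC_fin p (b) HnS); rewrite ?addn0.
- by case: (nB _ hi); rewrite (hm p (b+5+2) b) //; lia.
- by case: (nB _ hj).
- by case: (nA _ hi); rewrite (hm p (b+6+1) b) //; lia.
- by case: (nA _ hj).
- by apply: (caseC_fin p (a+4) HnS); rewrite ?addn0 // (hm p (a+4+3) a) //; lia.
- by case: (nB _ hj); rewrite (hm p (a+5+2) a) //; lia.
- by case: (nA _ hj); rewrite (hm p (a+6+1) a) //; lia.
Qed.
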